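(* Let $n\ge3$. For any real $3$-dimensional subspace $W\subset\mathbb{C}^n$, the orbit $\mathrm{SU}(n)\cdot W$ has the transitivity property. Consequently, for $p\ge3$, any nonempty compact $\mathrm{U}(n)$-invariant subset $\mathbb{G}\subset G^{\mathbb{R}}(p,\mathbb{C}^n)$ has the transitivity property.
   Context: $G^{\mathbb{R}}(p,\mathbb{C}^n)$ is the Grassmannian of real $p$-dimensional subspaces of $\mathbb{C}^n=\mathbb{R}^{2n}$. A set $\mathbb{G}$ of real planes in $\mathbb{R}^{2n}$ has the transitivity property if for any two vectors $x,y$ there exist $W_1,\dots,W_k\in\mathbb{G}$ with $x\in W_1$, $y\in W_k$ and $\dim_{\mathbb{R}}(W_i\cap W_{i+1})>0$ for $i=1,\dots,k-1$. *)

(* Defs.v *)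
From HB Require Import structures.
From mathcomp Require Import all_boot all_order all_algebra.
From mathcomp Require Import classical_sets reals topology normedtype.
From mathcomp Require Import complex.
Set Implicit Arguments. Unset Strict Implicit. Unset Printing Implicit Defensive.
Import Order.TTheory GRing.Theory Num.Theory numFieldTopology.Exports.
Local Open Scope ring_scope.
Local Open Scope classical_set_scope.

Section Defs.
Variables (R : realType) (n : nat).

(* C^n is identified with R^(2n) = R^(n+n) via a + i b |-> [a b] (row vectors).
   A complex n x n matrix M acting by right multiplication x |-> x M on row
   vectors of C^n is realified as the following real (n+n) x (n+n) matrix:
   [a b] *m realmx M = realification of ((a + i b) M). *)
Definition realmx (M : 'M[R[i]]_n) : 'M[R]_(n + n) :=
  block_mx (map_mx (@complex.Re R) M) (map_mx (@complex.Im R) M)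
           (- map_mx (@complex.Im R) M) (map_mx (@complex.Re R) M).

Definition unitary_mx (M : 'M[R[i]]_n) : Prop :=
  M *m (map_mx (@conjc R) M)^T = 1%:M.
Definition special_unitary_mx (M : 'M[R[i]]_n) : Prop :=
  unitary_mx M /\ \det M = 1.

(* The real Grassmannian G^R(p, C^n): a real p-dimensional subspace of
   R^(2n) is represented by the orthogonal projection matrix onto it
   (symmetric idempotent of rank p); the subspace is its row space.
   The topology is the one induced from the space of real matrices. *)
Definition grassR (p : nat) : set 'M[R]_(n + n) :=
  [set P | P^T = P /\ P *m P = P /\ \rank P = p].

(* Action of a (unitary) complex matrix M on a subspace given by its
   orthogonal projection P: the projection onto the image subspace. *)
Definition actmx (M : 'M[R[i]]_n) (P : 'M[R]_(n + n)) : 'M[R]_(n + n) :=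
  (realmx M)^T *m P *m realmx M.

Definition SU_orbit (P : 'M[R]_(n + n)) : set 'M[R]_(n + n) :=
  [set Q | exists M, special_unitary_mx M /\ Q = actmx M P].

Definition U_invariant (G : set 'M[R]_(n + n)) : Prop :=
  forall M P, unitary_mx M -> G P -> G (actmx M P).

Definition transitivity_property (G : set 'M[R]_(n + n)) : Prop :=
  forall x y : 'rV[R]_(n + n),
    exists (k : nat) (W : nat -> 'M[R]_(n + n)),
      [/\ (0 < k)%N,
          (forall i, (i < k)%N -> G (W i)),
          (x <= W 0%N)%MS,
          (y <= W k.-1)%MS &
          (forall i, (i.+1 < k)%N -> (0 < \rank (W i :&: W i.+1)%MS)%N)].

End Defs.
Arguments grassR R n p : clear implicits.

(* Main.v *)
Require Import Defs.
From HB Require Import structures.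
From mathcomp Require Import all_boot all_order all_algebra.
From mathcomp Require Import classical_sets reals topology normedtype.
From mathcomp Require Import complex spectral sesquilinear.
From mathcomp Require Import ring lra zify.
Import Order.TTheory GRing.Theory Num.Theory numFieldTopology.Exports.
Local Open Scope ring_scope.
Local Open Scope sesquilinear_scope.

Section Aux.
Variable R : realType.
Local Notation C := (R[i]).

Lemma conjCE (x : C) : Num.conj_op x = conjc x.
Proof. by case: x. Qed.

Lemma cmulE (a b c d : R) : ((a +i* b)%C * (c +i* d)%C : C) = ((a*c - b*d) +i* (a*d + b*c))%C.
Proof. by []. Qed.
Lemma caddE (a b c d : R) : ((a +i* b)%C + (c +i* d)%C : C) = ((a+c) +i* (b+d))%C.
Proof. by []. Qed.
Lemma ReM (x y : C) : complex.Re (x * y) = complex.Re x * complex.Re y - complex.Im x * complex.Im y.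
Proof. by case: x; case: y. Qed.
Lemma ImM (x y : C) : complex.Im (x * y) = complex.Re x * complex.Im y + complex.Im x * complex.Re y.
Proof. by case: x; case: y. Qed.
Lemma ReD (x y : C) : complex.Re (x + y) = complex.Re x + complex.Re y.
Proof. by case: x; case: y. Qed.
Lemma ImD (x y : C) : complex.Im (x + y) = complex.Im x + complex.Im y.
Proof. by case: x; case: y. Qed.

Variable n : nat.
Definition re (z : 'rV[C]_n) : 'rV[R]_(n+n) :=
  row_mx (map_mx (@complex.Re R) z) (map_mx (@complex.Im R) z).
Definition cx (v : 'rV[R]_(n+n)) : 'rV[C]_n :=
  \row_j ((lsubmx v 0 j) +i* (rsubmx v 0 j))%C.

Lemma reK v : re (cx v) = v.
Proof.
rewrite /re -[RHS]hsubmxK; congr row_mx; apply/rowP => j; by rewrite !mxE.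
Qed.

Lemma re_eq0 z : re z = 0 -> z = 0.
Proof.
move/eqP; rewrite -row_mx0 => /eqP/eq_row_mx [/rowP h1 /rowP h2].
apply/rowP => j; move: (h1 j) (h2 j); rewrite !mxE.
by case: (z 0 j) => a b /= -> ->.
Qed.

Lemma Re_sum (I : Type) (r : seq I) (P : pred I) (F : I -> C) :
  complex.Re (\sum_(i <- r | P i) F i) = \sum_(i <- r | P i) complex.Re (F i).
Proof. exact: (big_morph _ (@ReD) (erefl _)). Qed.
Lemma Im_sum (I : Type) (r : seq I) (P : pred I) (F : I -> C) :
  complex.Im (\sum_(i <- r | P i) F i) = \sum_(i <- r | P i) complex.Im (F i).
Proof. exact: (big_morph _ (@ImD) (erefl _)). Qed.

Lemma reM (z : 'rV[C]_n) (M : 'M[C]_n) : re (z *m M) = re z *m Defs.realmx M.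
Proof.
rewrite /re /Defs.realmx mul_row_block; congr row_mx; apply/rowP => j.
all: rewrite !mxE ?Re_sum ?Im_sum -big_split /=; apply: eq_bigr => k _.
all: rewrite !mxE ?ReM ?ImM; ring.
Qed.

Lemma cplx_ext (x y : C) : complex.Re x = complex.Re y -> complex.Im x = complex.Im y -> x = y.
Proof. by case: x; case: y => a b c d /= -> ->. Qed.

Lemma dotE (u v : 'rV[C]_n) : dotmx u v = \sum_k u 0 k * conjc (v 0 k).
Proof. rewrite dotmxE !mxE; apply: eq_bigr => k _; by rewrite !mxE conjCE. Qed.

Definition rdot (a b : 'rV[R]_(n+n)) := \sum_(k < n+n) a 0 k * b 0 k.
Definition Jv (b : 'rV[R]_(n+n)) : 'rV[R]_(n+n) := row_mx (- rsubmx b) (lsubmx b).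

Lemma dot_cx a b : dotmx (cx a) (cx b) = ((rdot a b)%:C + 'i * (rdot a (Jv b))%:C)%C.
Proof.
rewrite dotE /rdot !big_split_ord /= !rmorphD /= !rmorph_sum /= mulrDr !mulr_sumr -!big_split /=.
apply: eq_bigr => k _; rewrite /Jv row_mxEl row_mxEr !mxE /=.
apply: cplx_ext; rewrite /= ?ReD ?ImD ?ReM ?ImM /=; ring.
Qed.

Lemma unitaryE (M : 'M[C]_n) : unitary_mx M <-> M \is unitarymx.
Proof.
rewrite /unitary_mx; have -> : (map_mx (@conjc R) M)^T = M ^t* .
  by apply/matrixP => i j; rewrite !mxE conjCE.
by split => [h|/unitarymxP]; [apply/unitarymxP|].
Qed.

Lemma realmxM (A B : 'M[C]_n) : Defs.realmx (A *m B) = Defs.realmx A *m Defs.realmx B.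
Proof.
rewrite /Defs.realmx mulmx_block; congr block_mx; apply/matrixP => i j;
  rewrite !mxE ?Re_sum ?Im_sum -?sumrN -big_split /=; apply: eq_bigr => k _;
  rewrite !mxE ?ReM ?ImM; ring.
Qed.

Lemma realmx1 : Defs.realmx (1%:M : 'M[C]_n) = 1%:M.
Proof.
rewrite /Defs.realmx [RHS](scalar_mx_block n n); congr block_mx;
  apply/matrixP => i j; rewrite !mxE; by case: (i == j); rewrite /= ?oppr0.
Qed.

Lemma realmx_tr (M : 'M[C]_n) : (Defs.realmx M)^T = Defs.realmx (M ^t* ).
Proof.
rewrite /Defs.realmx tr_block_mx; congr block_mx; apply/matrixP => i j;
  rewrite !mxE ?conjCE; by case: (M j i) => a b /=; rewrite ?opprK.
Qed.

Lemma realmx_unit (M : 'M[C]_n) : M \is unitarymx -> (Defs.realmx M)^T \in unitmx.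
Proof.
move=> /unitarymxP /mulmx1C h.
have /mulmx1_unit [] // : (Defs.realmx M)^T *m Defs.realmx M = 1%:M.
by rewrite realmx_tr -realmxM h realmx1.
Qed.

Lemma actmx_sub (M : 'M[C]_n) (P : 'M[R]_(n+n)) (x : 'rV[R]_(n+n)) :
  M \is unitarymx -> (x <= P *m Defs.realmx M)%MS -> (x <= actmx M P)%MS.
Proof.
move=> /realmx_unit hu hx; apply: (submx_trans hx); rewrite /actmx -mulmxA.
by rewrite -{1}(mulKmx hu (P *m Defs.realmx M)) submxMl.
Qed.

Lemma cxK z : cx (re z) = z.
Proof.
apply/rowP => j; rewrite /re mxE row_mxKl row_mxKr !mxE.
by case: (z 0 j).
Qed.

Lemma cxZ (c : R) v : cx (c *: v) = (c%:C)%C *: cx v.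
Proof. apply/rowP => j; rewrite !mxE; apply: cplx_ext; rewrite /= ?ReM ?ImM /=; ring. Qed.

Lemma dotZl c (u v : 'rV[C]_n) : dotmx (c *: u) v = c * dotmx u v.
Proof. rewrite !dotE mulr_sumr; apply: eq_bigr => k _; by rewrite !mxE mulrA. Qed.

Lemma dotZr c (u v : 'rV[C]_n) : dotmx u (c *: v) = conjc c * dotmx u v.
Proof.
rewrite !dotE mulr_sumr; apply: eq_bigr => k _; rewrite !mxE rmorphM /=.
by rewrite mulrCA.
Qed.

Lemma dot_conj (u v : 'rV[C]_n) : dotmx v u = conjc (dotmx u v).
Proof.
rewrite !dotE rmorph_sum; apply: eq_bigr => k _; by rewrite rmorphM /= conjcK mulrC.
Qed.

Lemma rdotZl c a b : rdot (c *: a) b = c * rdot a b.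
Proof. rewrite /rdot mulr_sumr; apply: eq_bigr => k _; by rewrite !mxE mulrA. Qed.
Lemma rdotZr c a b : rdot a (c *: b) = c * rdot a b.
Proof. rewrite /rdot mulr_sumr; apply: eq_bigr => k _; by rewrite !mxE mulrCA. Qed.
Lemma JvZ c a : Jv (c *: a) = c *: Jv a.
Proof. by apply/rowP => j; rewrite /Jv !mxE; case: splitP => k _; rewrite !mxE ?mulrN. Qed.

Lemma rdotJ a : rdot a (Jv a) = 0.
Proof.
rewrite /rdot big_split_ord /= -big_split /=; apply: big1 => k _.
rewrite /Jv row_mxEl row_mxEr !mxE; ring.
Qed.

Lemma rdot_gt0 a : a != 0 -> 0 < rdot a a.
Proof.
move=> a0.
have /existsP [k hk] : [exists k, a 0 k != 0].
  apply: contraNT a0; rewrite negb_exists => /forallP h.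
  by apply/eqP/rowP => j; rewrite mxE; apply/eqP; rewrite -[_ == _]negbK h.
rewrite /rdot (bigD1 k) //= ltr_wpDr // ?sumr_ge0 // => [j _|].
  by rewrite -expr2 sqr_ge0.
by rewrite -expr2 exprn_even_gt0.
Qed.

Lemma cx_eq0 a : (cx a == 0) = (a == 0).
Proof.
apply/eqP/eqP => [h|->]; first by rewrite -[a]reK h; apply/rowP => j; rewrite /re !mxE; case: splitP => k _; rewrite !mxE.
by apply/rowP => j; rewrite !mxE.
Qed.

Lemma rnormalize a : a != 0 -> exists s : R, dotmx (cx (s *: a)) (cx (s *: a)) = 1.
Proof.
move=> a0; have ha := rdot_gt0 _ a0.
exists (Num.sqrt (rdot a a))^-1.
rewrite dot_cx JvZ !rdotZr !rdotZl rdotJ !mulr0 mulrA -expr2 exprVn.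
rewrite sqr_sqrtr ?ltW // mulVf ?gt_eqF //.
by apply: cplx_ext; rewrite /= ?ReM ?ImM /=; ring.
Qed.

Lemma cnormalize (z : 'rV[C]_n) : z != 0 -> exists s : R, dotmx ((s%:C)%C *: z) ((s%:C)%C *: z) = 1.
Proof.
move=> z0; have a0 : re z != 0 by apply: contra z0 => /eqP/re_eq0 ->.
have [s hs] := rnormalize _ a0; exists s; by rewrite cxZ cxK in hs.
Qed.

Lemma tcM m p q (X : 'M[C]_(m,p)) (Y : 'M[C]_(p,q)) : (X *m Y)^t* = Y^t* *m X^t*.
Proof. by rewrite trmx_mul map_mxM. Qed.

Lemma ortho_exists m (A : 'M[C]_(m,n)) : (m < n)%N ->
  exists z, dotmx z z = 1 /\ forall u, (u <= A)%MS -> dotmx u z = 0.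
Proof.
move=> mn; set K := kermx (A^t*).
have rK : (0 < \rank K)%N.
  rewrite /K mxrank_ker; have := rank_leq_col (A^t*); lia.
have v0 : nz_row K != 0 by rewrite nz_row_eq0 -mxrank_eq0 -lt0n.
have vK : nz_row K *m A^t* = 0 by apply/sub_kermxP/nz_row_sub.
have [s hs] := cnormalize _ v0; exists ((s%:C)%C *: nz_row K); split => // u uA.
have hz : A *m ((s%:C)%C *: nz_row K)^t* = 0.
  by rewrite -[A]trmxCK -tcM -scalemxAl vK scaler0 /= trmx0 map_mx0.
rewrite dotmxE -(mulmxKpV uA) -!mulmxA hz !mulmx0 mxE //.
Qed.

Lemma rdotE a b : rdot a b = (a *m b^T) 0 0.
Proof. rewrite /rdot mxE; apply: eq_bigr => k _; by rewrite mxE. Qed.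

Lemma real_pair (P : 'M[R]_(n+n)) : (3 <= \rank P)%N -> exists u w : 'rV_(n+n),
  [/\ (u <= P)%MS, (w <= P)%MS, dotmx (cx u) (cx u) = 1, dotmx (cx w) (cx w) = 1 &
      (dotmx (cx u) (cx w) = 0 /\ dotmx (cx w) (cx u) = 0)].
Proof.
move=> rP.
have u0 : nz_row P != 0 by rewrite nz_row_eq0 -mxrank_eq0 -lt0n; lia.
set U := col_mx (nz_row P) (Jv (nz_row P)).
set K := kermx U^T.
have rc : (0 < \rank (P :&: K))%N.
  have := mxrank_sum_cap P K; have := rank_leq_col (P + K)%MS.
  rewrite /K mxrank_ker; have := rank_leq_col U^T; lia.
have w0 : nz_row (P :&: K)%MS != 0 by rewrite nz_row_eq0 -mxrank_eq0 -lt0n.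
have := nz_row_sub (P :&: K)%MS; rewrite sub_capmx => /andP [wP /sub_kermxP wK].
move: wK; rewrite /U tr_col_mx mul_mx_row -row_mx0 => /eq_row_mx [h1 h2].
have d0 : dotmx (cx (nz_row (P :&: K)%MS)) (cx (nz_row P)) = 0.
  by rewrite dot_cx !rdotE h1 h2 !mxE rmorph0 mulr0 addr0.
have [su hu] := rnormalize _ u0; have [sw hw] := rnormalize _ w0.
exists (su *: nz_row P), (sw *: nz_row (P :&: K)%MS); split => //; last split.
- exact/scalemx_sub/nz_row_sub.
- exact/scalemx_sub.
- by rewrite dot_conj !cxZ dotZl dotZr d0 !mulr0 rmorph0.
- by rewrite !cxZ dotZl dotZr d0 !mulr0.
Qed.

Local Notation "B ^!" :=
  (orthomx Num.Def.conjC (mx_of_hermitian (hermitian1mx _)) B) : matrix_set_scope.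

Lemma colV_unitary (V : 'M[C]_(2,n)) : V \is unitarymx ->
  col_mx V (schmidt (row_base V^!%MS)) \is unitarymx.
Proof.
move=> Vu; apply/unitarymxP; rewrite tr_col_mx map_row_mx mul_col_row.
rewrite (unitarymxP Vu) (unitarymxP (schmidt_unitarymx _ _)) ?rank_leq_col //.
have o : (schmidt (row_base V^!%MS) <= V^!)%MS.
  by rewrite eqmx_schmidt_free ?row_base_free // eq_row_base.
have o2 := o; rewrite orthomx_sym in o2.
by rewrite (orthomx1P o2) (orthomx1P o) -scalar_mx_block.
Qed.

Lemma complete (V : 'M[C]_(2,n)) (h : (2 <= n)%N) : V \is unitarymx ->
  exists A : 'M[C]_n, A \is unitarymx /\ forall i : 'I_2, row (widen_ord h i) A = row i V.
Proof.
move=> Vu; set X := col_mx V (schmidt (row_base V^!%MS)).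
have e : (2 + \rank V^!%MS = n)%N.
  by rewrite rank_ortho mxrank_unitary // subnKC.
have Xu := colV_unitary _ Vu.
exists (castmx (e, erefl) X); split.
  apply/unitarymxP/matrixP => i j; move/unitarymxP/matrixP: Xu => /(_ (cast_ord (esym e) i) (cast_ord (esym e) j)).
  rewrite !mxE => <-; apply: eq_bigr => k _; rewrite !mxE !castmxE /= !cast_ord_id //.
  by rewrite /X !mxE.
move=> i; apply/rowP => k; rewrite !mxE castmxE /= cast_ord_id.
have -> : cast_ord (esym e) (widen_ord h i) = lshift _ i by apply: val_inj.
by rewrite col_mxEu.
Qed.

Lemma delta_conj (g : 'M[C]_n) : g \is unitarymx -> \det g * conjc (\det g) = 1.
Proof.
move=> /unitarymxP /(congr1 determinant); rewrite det_mulmx det1.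
rewrite det_map_mx det_tr. move=> <-; congr (_ * _); by case: (\det g).
Qed.

Definition Dmx (k : 'I_n) (c : C) : 'M[C]_n := diag_mx (\row_j (if j == k then c else 1)).

Lemma Dunit k c : c * conjc c = 1 -> Dmx k c \is unitarymx.
Proof.
move=> hc; apply/unitarymxP; rewrite /Dmx tr_diag_mx map_diag_mx mulmx_diag.
rewrite -diag_const_mx; congr diag_mx; apply/rowP => j; rewrite !mxE.
by case: (j == k); [move: hc; case: c | rewrite rmorph1 mulr1].
Qed.

Lemma Ddet k c : \det (Dmx k c) = c.
Proof.
rewrite det_diag (bigD1 k) //= big1 => [|j /negbTE jk]; last by rewrite mxE jk.
by rewrite mxE eqxx mulr1.
Qed.

Lemma De k c (j : 'I_n) : (j != k) -> ('e_j : 'rV[C]_n) *m Dmx k c = 'e_j.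
Proof.
move=> jk; rewrite mul_mx_diag; apply/matrixP => a b; rewrite !mxE.
have [->|bj] := eqVneq b j; last by rewrite andbF mul0r.
by rewrite (negbTE jk) mulr1.
Qed.

Lemma su_pair (h3 : (3 <= n)%N) (V1 V2 : 'M[C]_(2,n)) :
  V1 \is unitarymx -> V2 \is unitarymx ->
  exists g, special_unitary_mx g /\ V1 *m g = V2.
Proof.
move=> V1u V2u; have h : (2 <= n)%N by apply: ltnW.
have [A1 [A1u hA1]] := complete _ h V1u.
have [A2 [A2u hA2]] := complete _ h V2u.
have g0u : A1^t* *m A2 \is unitarymx.
  by apply: mul_unitarymx; [rewrite trmxC_unitary; exact: A1u | exact: A2u].
have dd := delta_conj _ g0u.
pose k : 'I_n := Ordinal h3.
have Du : Dmx k (conjc (\det (A1^t* *m A2))) \is unitarymx.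
  by apply: Dunit; rewrite conjcK mulrC.
exists (A1^t* *m Dmx k (conjc (\det (A1^t* *m A2))) *m A2); split; first split.
- apply/unitaryE; apply: mul_unitarymx; last exact: A2u.
  apply: mul_unitarymx; last exact: Du.
  rewrite trmxC_unitary; exact: A1u.
- rewrite !det_mulmx Ddet mulrAC -det_mulmx; exact: dd.
apply/row_matrixP => i; rewrite row_mul -hA1 -row_mul !mulmxA.
rewrite (unitarymxP A1u) !row_mul row1 De ?hA2 -?rowE ?hA2 //.
by rewrite -(inj_eq val_inj) /=; case: i => [[|[|]]].
Qed.
Lemma dot00 : dotmx (0 : 'rV[C]_n) 0 = 0.
Proof. by rewrite dotE big1 // => k _; rewrite mxE mul0r. Qed.

Lemma pair_unitary (p q : 'rV[C]_n) : dotmx p p = 1 -> dotmx q q = 1 -> dotmx p q = 0 ->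
  (col_mx p q : 'M_(1 + 1, n)) \is unitarymx.
Proof.
move=> pp qq pq; have qp : dotmx q p = 0 by rewrite dot_conj pq rmorph0.
have E (a b : 'rV[C]_n) : a *m b^t* = (dotmx a b)%:M.
  by apply/matrixP => i j; rewrite !ord1 [RHS]mxE eqxx mulr1n dotmxE.
apply/unitarymxP.
rewrite tr_col_mx map_row_mx mul_col_row !E pp qq pq qp.
by rewrite raddf0 -scalar_mx_block.
Qed.

Lemma hat_exists (x : 'rV[R]_(n+n)) (z : 'rV[C]_n) : (1 < n)%N ->
  dotmx z z = 1 -> dotmx (cx x) z = 0 ->
  exists xh (c : R), [/\ dotmx xh xh = 1, dotmx xh z = 0 & x = c *: re xh].
Proof.
move=> n1 zz xz; have [->|x0] := eqVneq x 0.
  have [xh [hh hz]] := ortho_exists _ z n1.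
  exists xh, 0; split; [exact: hh| |by rewrite scale0r].
  by rewrite dot_conj hz ?submx_refl // rmorph0.
have [s hs] := rnormalize x x0.
have s0 : s != 0.
  apply/eqP => s0; move: hs; rewrite s0 scale0r.
  have -> : cx (0 : 'rV[R]_(n+n)) = 0 by apply/eqP; rewrite cx_eq0.
  by rewrite dot00 => /eqP; rewrite eq_sym oner_eq0.
exists (cx (s *: x)), s^-1; split; [exact: hs| |].
  by rewrite cxZ dotZl xz mulr0.
by rewrite reK scalerA mulVf // scale1r.
Qed.

Lemma main_chain (h3 : (3 <= n)%N) (P : 'M[R]_(n+n)) (S : set 'M[R]_(n+n)) :
  (3 <= \rank P)%N -> (forall g, special_unitary_mx g -> S (actmx g P)) ->
  transitivity_property S.
Proof.
move=> rP hS x y.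
have [u [w [uP wP uu ww [uw wu]]]] := real_pair P rP.
have n1 : (1 < n)%N by apply: ltnW.
have [z [zz hz]] := ortho_exists _ (col_mx (cx x) (cx y)) h3.
have := submx_refl (col_mx (cx x) (cx y)); rewrite col_mx_sub => /andP [xs ys].
have [xh [cxh [xx xz ex]]] := hat_exists x z n1 zz (hz _ xs).
have [yh [cyh [yy yz ey]]] := hat_exists y z n1 zz (hz _ ys).
have zx : dotmx z xh = 0 by rewrite dot_conj xz rmorph0.
have zy : dotmx z yh = 0 by rewrite dot_conj yz rmorph0.
have [g1 [g1u e1]] := su_pair h3 _ _ (pair_unitary _ _ uu ww uw) (pair_unitary _ _ xx zz xz).
have [g2 [g2u e2]] := su_pair h3 _ _ (pair_unitary _ _ uu ww uw) (pair_unitary _ _ yy zz yz).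
move: e1; rewrite (mul_col_mx (cx u) (cx w)) => /(@eq_col_mx _ 1 1 n) [e1u e1w].
move: e2; rewrite (mul_col_mx (cx u) (cx w)) => /(@eq_col_mx _ 1 1 n) [e2u e2w].
have U1 : g1 \is unitarymx by apply/unitaryE; case: g1u.
have U2 : g2 \is unitarymx by apply/unitaryE; case: g2u.
have sub1 (v : 'rV_(n+n)) (g : 'M[C]_n) : g \is unitarymx -> (v <= P)%MS ->
    (re (cx v *m g) <= actmx g P)%MS.
  move=> gu vP; apply: (actmx_sub _ _ _ gu); rewrite reM reK; exact: submxMr.
exists 2%N, (fun i => if i == 0%N then actmx g1 P else actmx g2 P); split.
- by [].
- by move=> i _; case: (i == 0%N); apply: hS.
- by rewrite /= ex; apply: scalemx_sub; rewrite -e1u; apply: sub1.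
- by rewrite /= ey; apply: scalemx_sub; rewrite -e2u; apply: sub1.
move=> [|i] // _ /=.
have z0 : re z != 0.
  apply/eqP => /re_eq0 z0; move: zz; rewrite z0 dot00 => /eqP; by rewrite eq_sym oner_eq0.
have rz : (0 < \rank (re z))%N by rewrite rank_rV z0.
apply: (leq_trans rz); apply: mxrankS.
rewrite sub_capmx; apply/andP; split.
  by rewrite -e1w; apply: sub1.
by rewrite -e2w; apply: sub1.
Qed.
End Aux.

Local Open Scope classical_set_scope.

Theorem corollary11p5 (R : realType) (n : nat) (hn : (3 <= n)%N) :
  (forall W : 'M[R]_(n + n), grassR R n 3 W ->
     transitivity_property (SU_orbit W))
  /\
  (forall (p : nat), (3 <= p)%N ->
     forall G : set 'M[R]_(n + n),
       G `<=` grassR R n p -> G !=set0 -> compact G -> U_invariant G ->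
       transitivity_property G).
Proof.
split.
  move=> W [_ [_ rW]]; apply: (@main_chain R n hn W); first by rewrite rW.
  by move=> g gs; exists g.
move=> p hp G sub [P GP] _ inv; apply: (@main_chain R n hn P).
  by have [_ [_ ->]] := sub P GP.
by move=> g [gu _]; apply: inv.
Qed.
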